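(* Let $\theta\in(0,\pi/2)$ and $|\psi_1\rangle=\cos\theta|00\rangle+\sin\theta|11\rangle$. Then there exist unit vectors $\hat a_1,\hat a_2,\hat a_3\in\mathbb R^3$ and an orthonormal triple $\hat b_1,\hat b_2,\hat b_3\in\mathbb R^3$ such that $\frac13\sum_{k=1}^3\langle\psi_1|(\hat a_k\cdot\vec\sigma)\otimes(\hat b_k\cdot\vec\sigma)|\psi_1\rangle=\frac{2+\sqrt{1+2\sin^2 2\theta}}{3\sqrt3}>\frac1{\sqrt3}.$
   Context: $\vec\sigma=(\sigma_x,\sigma_y,\sigma_z)$ is the vector of Pauli matrices; the first tensor factor is Alice's qubit, the second Bob's; $\{|0\rangle,|1\rangle\}$ is the computational basis. The number $1/\sqrt3$ is the local-hidden-state bound of the 3-setting linear steering inequality $\frac13\sum_{k=1}^3\langle A_k(\hat b_k\cdot\vec\sigma^B)\rangle\le\frac1{\sqrt3}$ with mutually orthogonal $\hat b_k$. *)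

(* Defs.v *)
From HB Require Import structures.
From mathcomp Require Import all_boot all_order all_algebra.
From mathcomp Require Import all_classical all_reals all_analysis.
From mathcomp Require Import complex mxtens.
Set Implicit Arguments. Unset Strict Implicit. Unset Printing Implicit Defensive.
Import Order.TTheory GRing.Theory Num.Theory.
Local Open Scope ring_scope.
Local Open Scope complex_scope.

Section Qubits.
Variable R : realType.
Local Notation C := R[i].

Definition ket0 : 'cV[C]_2 := \col_(i < 2) (if val i == 0%N then 1 else 0).
Definition ket1 : 'cV[C]_2 := \col_(i < 2) (if val i == 1%N then 1 else 0).

Definition sigma_x : 'M[C]_2 := \matrix_(i < 2, j < 2) (if val i == val j then 0 else 1).
Definition sigma_y : 'M[C]_2 :=
  \matrix_(i < 2, j < 2)
    (if val i == val j then 0 else if val i == 0%N then - 'i else 'i).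
Definition sigma_z : 'M[C]_2 :=
  \matrix_(i < 2, j < 2) (if val i == val j then (if val i == 0%N then 1 else -1) else 0).

Definition dot_sigma (a : 'rV[R]_3) : 'M[C]_2 :=
  (a 0 0)%:C *: sigma_x + (a 0 1)%:C *: sigma_y + (a 0 2)%:C *: sigma_z.

Definition dot3 (u v : 'rV[R]_3) : R := \sum_(i < 3) u 0 i * v 0 i.

Definition adj {m n} (A : 'M[C]_(m, n)) : 'M[C]_(n, m) := (map_mx conjc A)^T.

Definition expect {n} (psi : 'cV[C]_n) (M : 'M[C]_n) : C := (adj psi *m M *m psi) 0 0.

(* |psi_1> = cos t |00> + sin t |11>, first tensor factor = Alice *)
Definition psi1 (t : R) : 'cV[C]_(2 * 2) :=
  (cos t)%:C *: (ket0 *t ket0) + (sin t)%:C *: (ket1 *t ket1).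
End Qubits.

(* Main.v *)
Require Import Defs.
From HB Require Import structures.
From mathcomp Require Import all_boot all_order all_algebra.
From mathcomp Require Import all_classical all_reals all_analysis.
From mathcomp Require Import complex mxtens.
From mathcomp Require Import ring lra.
Import Order.TTheory GRing.Theory Num.Theory.
Local Open Scope ring_scope.
Local Open Scope complex_scope.

Section S.
Variable R : realType.
Local Notation C := R[i].

Lemma adj_tens m n p q (u : 'M[C]_(m,n)) (v : 'M[C]_(p,q)) :
  adj (u *t v) = adj u *t adj v.
Proof. by rewrite /adj map_mxT trmx_tens. Qed.

Lemma adjD m n (u v : 'M[C]_(m,n)) : adj (u + v) = adj u + adj v.
Proof. by apply/matrixP => i j; rewrite !mxE rmorphD. Qed.

Lemma adjZr m n (c : R) (u : 'M[C]_(m,n)) : adj (c%:C *: u) = c%:C *: adj u.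
Proof. apply/matrixP => i j; rewrite !mxE rmorphM; congr (_ * _); exact: conjc_real. Qed.

Lemma sand m p (u1 v1 : 'cV[C]_m) (u2 v2 : 'cV[C]_p) (A : 'M[C]_m) (B : 'M[C]_p) :
  (adj (u1 *t u2) *m (A *t B) *m (v1 *t v2)) 0 0 =
  (adj u1 *m A *m v1) 0 0 * (adj u2 *m B *m v2) 0 0.
Proof.
rewrite adj_tens !tensmx_mul mxE.
by case: mxtens_unindex => x y /=; rewrite [x]ord1 [y]ord1.
Qed.

Lemma adjk0 : adj (ket0 R) = (ket0 R)^T.
Proof. apply/matrixP => i j; rewrite !mxE; case: ifP => _; [exact: rmorph1 | exact: rmorph0]. Qed.
Lemma adjk1 : adj (ket1 R) = (ket1 R)^T.
Proof. apply/matrixP => i j; rewrite !mxE; case: ifP => _; [exact: rmorph1 | exact: rmorph0]. Qed.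

Lemma k0d : ket0 R = delta_mx 0 0.
Proof. apply/matrixP => i j; rewrite !mxE [j]ord1 eqxx andbT; by case: i => [[|[|k]] Hk]. Qed.
Lemma k1d : ket1 R = delta_mx 1 0.
Proof. apply/matrixP => i j; rewrite !mxE [j]ord1 eqxx andbT; by case: i => [[|[|k]] Hk]. Qed.

Lemma sandd (A : 'M[C]_2) i j : ((delta_mx i 0 : 'cV[C]_2)^T *m A *m (delta_mx j 0 : 'cV[C]_2)) 0 0 = A i j.
Proof. by rewrite trmx_delta -rowE -colE !mxE. Qed.
Lemma ds00 (a : 'rV[R]_3) : dot_sigma a 0 0 = (a 0 2)%:C.
Proof. rewrite /dot_sigma !mxE /= -?complexiE. ring. Qed.
Lemma ds01 (a : 'rV[R]_3) : dot_sigma a 0 1 = (a 0 0)%:C - 'i%C * (a 0 1)%:C.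
Proof. rewrite /dot_sigma !mxE /= -?complexiE. ring. Qed.
Lemma ds10 (a : 'rV[R]_3) : dot_sigma a 1 0 = (a 0 0)%:C + 'i%C * (a 0 1)%:C.
Proof. rewrite /dot_sigma !mxE /= -?complexiE. ring. Qed.
Lemma ds11 (a : 'rV[R]_3) : dot_sigma a 1 1 = - (a 0 2)%:C.
Proof. rewrite /dot_sigma !mxE /= -?complexiE. ring. Qed.

Lemma expand n (c s : R) (X Y : 'cV[C]_n) (M : 'M[C]_n) :
  (adj (c%:C *: X + s%:C *: Y) *m M *m (c%:C *: X + s%:C *: Y)) 0 0 =
  c%:C * c%:C * (adj X *m M *m X) 0 0 + c%:C * s%:C * (adj X *m M *m Y) 0 0
  + s%:C * c%:C * (adj Y *m M *m X) 0 0 + s%:C * s%:C * (adj Y *m M *m Y) 0 0.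
Proof.
rewrite adjD !adjZr.
move: (adj X) (adj Y) => aX aY.
move: (c%:C) (s%:C) => c' s'.
rewrite !mulmxDl.
rewrite !mulmxDr.
rewrite -!scalemxAl -!scalemxAr.
move: (aX *m M *m X) (aX *m M *m Y) (aY *m M *m X) (aY *m M *m Y) => T1 T2 T3 T4.
rewrite !mxE.
ring.
Qed.

Lemma expG (t : R) (A B : 'M[C]_2) :
  expect (psi1 t) (A *t B) =
  (cos t)%:C * (cos t)%:C * (A 0 0 * B 0 0) + (cos t)%:C * (sin t)%:C * (A 0 1 * B 0 1)
  + (sin t)%:C * (cos t)%:C * (A 1 0 * B 1 0) + (sin t)%:C * (sin t)%:C * (A 1 1 * B 1 1).
Proof.
rewrite /expect /psi1 (expand _ (cos t) (sin t) (ket0 R *t ket0 R) (ket1 R *t ket1 R) (A *t B)).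
rewrite !sand.
rewrite adjk0 adjk1 k0d k1d !sandd.
done.
Qed.

Lemma rcD (x y : R) : (x + y)%:C = x%:C + y%:C :> C. Proof. exact: rmorphD. Qed.
Lemma rcB (x y : R) : (x - y)%:C = x%:C - y%:C :> C. Proof. exact: rmorphB. Qed.
Lemma rcM (x y : R) : (x * y)%:C = x%:C * y%:C :> C. Proof. exact: rmorphM. Qed.
Lemma rcX (x : R) n : (x ^+ n)%:C = x%:C ^+ n :> C. Proof. exact: rmorphXn. Qed.
Lemma rcn n : (n%:R : R)%:C = n%:R :> C. Proof. exact: rmorph_nat. Qed.
Lemma rcV (x : R) : (x^-1)%:C = x%:C^-1 :> C. Proof. exact: fmorphV. Qed.

Lemma expE (t : R) (a b : 'rV[R]_3) :
  expect (psi1 t) (dot_sigma a *t dot_sigma b) =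
  (a 0 2 * b 0 2 * (cos t ^+ 2 + sin t ^+ 2) + 2 * cos t * sin t * (a 0 0 * b 0 0 - a 0 1 * b 0 1))%:C.
Proof.
rewrite expG !ds00 !ds01 !ds10 !ds11.
rewrite !(rcD, rcM, rcB, rcX, rcn).
transitivity ((a 0 2)%:C * (b 0 2)%:C * ((cos t)%:C ^+ 2 + (sin t)%:C ^+ 2) +
  2 * (cos t)%:C * (sin t)%:C * ((a 0 0)%:C * (b 0 0)%:C) +
  2 * (cos t)%:C * (sin t)%:C * (a 0 1)%:C * (b 0 1)%:C * ('i%C ^+ 2 )).
  ring.
rewrite sqr_i. ring.
Qed.
Definition mk3 (x y z : R) : 'rV[R]_3 :=
  \row_(j < 3) (if val j == 0%N then x else if val j == 1%N then y else z).

Lemma dot3E x y z x' y' z' : dot3 (mk3 x y z) (mk3 x' y' z') = x * x' + y * y' + z * z'.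
Proof. rewrite /dot3 !big_ord_recr big_ord0 /= !mxE /=. ring. Qed.

End S.
Arguments mk3 {R}.


Lemma arithPQ (R : realFieldType) (P Q : R) : P * P = 2^-1 -> Q * Q = 3^-1 ->
  [/\ [/\ P*P + P*Q*(P*Q) + Q*Q = 1, P * - P + P*Q*(P*Q) + Q*Q = 0 &
      P * 0 + P*Q * - (2*P*Q) + Q*Q = 0],
     [/\ - P * P + P*Q*(P*Q) + Q*Q = 0,
      - P * - P + P*Q*(P*Q) + Q*Q = 1 & - P * 0 + P*Q * - (2*P*Q) + Q*Q = 0] &
   [/\ 0 * P + - (2*P*Q) * (P*Q) + Q*Q = 0,
      0 * - P + - (2*P*Q) * (P*Q) + Q*Q = 0 &
      0 * 0 + - (2*P*Q) * - (2*P*Q) + Q*Q = 1]].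
Proof.
move=> h1 h2. have h3 : P * Q * (P * Q) = 6^-1.
  have -> : P * Q * (P * Q) = (P * P) * (Q * Q) by ring. rewrite h1 h2 -invfM. congr (_^-1). ring.
by split; split; nra.
Qed.

Lemma rc_sum3 (R : realType) (F : 'I_3 -> R) : \sum_(k < 3) (F k)%:C = (\sum_(k < 3) F k)%:C.
Proof. by rewrite rmorph_sum. Qed.

Theorem mainTheorem8 (R : realType) (theta : R) :
  0 < theta -> theta < pi / 2 ->
  exists (a b : 'I_3 -> 'rV[R]_3),
    (forall k, dot3 (a k) (a k) = 1) /\
    (forall k l, dot3 (b k) (b l) = (k == l)%:R) /\
    (3%:R^-1 * \sum_(k < 3)
        expect (psi1 theta) (dot_sigma (a k) *t dot_sigma (b k))
      = ((2 + Num.sqrt (1 + 2 * sin (2 * theta) ^+ 2))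
           / (3 * Num.sqrt 3))%:C) /\
    (2 + Num.sqrt (1 + 2 * sin (2 * theta) ^+ 2)) / (3 * Num.sqrt 3)
      > (Num.sqrt 3)^-1.
Proof.
move=> th0 th1.
have hS2 : sin (2 * theta) = 2 * cos theta * sin theta.
  have -> : 2 * theta = theta + theta by ring.
  rewrite sinD; ring.
have Spos : 0 < sin (2 * theta).
  apply: sin_gt0_pi; apply/andP; split; lra.
set S := sin (2 * theta).
set r := Num.sqrt (1 + 2 * S ^+ 2).
have hr2 : r ^+ 2 = 1 + 2 * S ^+ 2.
  by rewrite sqr_sqrtr // addr_ge0 // mulr_ge0 // sqr_ge0.
have r1 : 1 < r.
  have S2p : 0 < 2 * S ^+ 2 by rewrite mulr_gt0 // exprn_gt0.
  rewrite -sqrtr1 /r ltr_sqrt; lra.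
have r0 : r != 0 by apply/eqP => h; rewrite h in r1; lra.
set q := Num.sqrt 3.
have q0 : 0 < q by rewrite sqrtr_gt0.
have hq2 : q ^+ 2 = 3 by rewrite sqr_sqrtr.
pose p := Num.sqrt (2 : R).
have p0 : 0 < p by rewrite sqrtr_gt0.
have hp2 : p ^+ 2 = 2 by rewrite sqr_sqrtr.
pose P := p^-1. set Q := q^-1.
have hPP : P * P = 2^-1 by rewrite /P -invfM -expr2 hp2.
have hQQ : Q * Q = 3^-1 by rewrite /Q -invfM -expr2 hq2.
have hPQ : P * Q * (P * Q) = 6^-1.
  have -> : P * Q * (P * Q) = (P * P) * (Q * Q) by ring.
  rewrite hPP hQQ -invfM; congr (_^-1); ring.
pose b0 := mk3 P (P * Q) Q.
pose b1 := mk3 (- P) (P * Q) Q.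
pose b2 := mk3 0 (- (2 * P * Q)) Q.
pose e3 := @mk3 R 0 0 1.
pose a2 := mk3 0 (2 * P * S / r) r^-1.
exists (fun k : 'I_3 => if val k == 2%N then a2 else e3).
exists (fun k : 'I_3 => if val k == 0%N then b0 else if val k == 1%N then b1 else b2).
have r2n : 1 + 2 * S ^+ 2 != 0 by rewrite -hr2 expf_neq0.
have [[g1 g2 g3] [g4 g5 g6] [g7 g8 g9]] := @arithPQ _ P Q hPP hQQ.
split; [|split; [|split]].
{ move=> [[|[|[|k]]] Hk] //=; rewrite ?dot3E.
  { ring. }
  { ring. }
  transitivity ((4 * (P * P) * S ^+ 2 + 1) / r ^+ 2); first by field.
  rewrite hPP hr2; field; by rewrite ?r2n. }
{ move=> [[|[|[|k]]] //= Hk] [[|[|[|l]]] //= Hl]; rewrite ?dot3E.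
  all: rewrite ?mulr1n ?mulr0n; first [exact: g1|exact: g2|exact: g3|exact: g4|exact: g5|exact: g6|exact: g7|exact: g8|exact: g9]. }
{ under eq_bigr do rewrite expE.
  rewrite cos2Dsin2 -hS2 rc_sum3 -(rcn _ 3) -rcV -rcM.
  apply: congr1.
  rewrite !big_ord_recr big_ord0 /= !mxE /=.
  rewrite -/S.
  transitivity (3^-1 * (2 * Q + Q * (1 + 2 * (2 * (P * P)) * S ^+ 2) / r)); first by field.
  have -> : 2 * (P * P) = 1 by rewrite hPP mulfV.
  rewrite mulr1 -hr2 /Q.
  have q0' : q != 0 by rewrite gt_eqF.
  by field; rewrite ?q0' ?r0. }
have -> : (2 + r) / (3 * q) = q^-1 + (r - 1) / (3 * q) by field; lra.
by rewrite ltrDl divr_gt0 // ?subr_gt0 // mulr_gt0.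
Qed.
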